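(* Let $m\ge1$, let $Y$ be a set of $m$ indices and $(z_i)_{i\in Y}$ pairwise distinct complex numbers, and let $t\in\mathbb{C}$, $\tau\in\mathbb{Z}$ be such that all denominators below are nonzero. Then \[ \sum_{(J,K)}(-1)^{n_D}\prod_{j\in J}\frac{1}{tz_j\omega^{\tau+n_D+1}-1}\prod_{q=1}^{n_D}\frac{\omega^{q-1}}{tz_{k_q}\omega^{\tau+n_D}-1}\prod_{j\in J}\prod_{k\in K}\frac{z_k-z_j\omega}{z_k-z_j}=0, \] where the sum runs over all ordered pairs $(J,K)$ of disjoint subsets with $J\cup K=Y$, $n_D=\#K$, and $K=\{k_1,\ldots,k_{n_D}\}$.
   Context: $\omega$ is a fixed primitive $N$-th root of unity, $N\ge2$. *)

(* Defs.v *)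
From HB Require Import structures.
From mathcomp Require Import all_boot all_order all_algebra all_field.
Set Implicit Arguments. Unset Strict Implicit. Unset Printing Implicit Defensive.

(* Main.v *)
Require Import Defs.
From HB Require Import structures.
From mathcomp Require Import all_boot all_order all_algebra all_field.
Set Implicit Arguments. Unset Strict Implicit. Unset Printing Implicit Defensive.
Import Order.TTheory GRing.Theory Num.Theory.
Local Open Scope ring_scope.

Definition vK (C : fieldType) p (z : 'I_p.+1 -> C) (w : C) (K : {set 'I_p.+1}) : 'rV[C]_p.+1 :=
  \row_j (if j \in K then z j else w * z j).
Definition Xf (C : fieldType) p (z : 'I_p.+1 -> C) (w : C) k j := (z k - z j * w) / (z k - z j).
Definition Qf (C : fieldType) p (w : C) (J : {set 'I_p.+1}) :=
  \prod_(i < p.+1) \prod_(j < p.+1 | (i < j)%N) (if (i \in J) && (j \in J) then w else 1).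

Lemma exch_lt (C : fieldType) p (G : 'I_p.+1 -> 'I_p.+1 -> C) :
  \prod_(i < p.+1) \prod_(j < p.+1 | (i < j)%N) G i j
  = \prod_(j < p.+1) \prod_(i < p.+1 | (i < j)%N) G i j.
Proof. by rewrite (exchange_big_dep predT). Qed.

Lemma crossE (C : fieldType) p (F : 'I_p.+1 -> 'I_p.+1 -> C) (K : {set 'I_p.+1}) :
  \prod_(i < p.+1) \prod_(j < p.+1 | (i < j)%N) ((if (i \in K) && (j \notin K) then F i j else 1)
     * (if (i \notin K) && (j \in K) then F j i else 1))
  = \prod_(k in K) \prod_(j in ~: K) F k j.
Proof.
rewrite [LHS](eq_bigr _ (fun i _ => big_split _ _ _ _ _)) /=.
rewrite big_split /=.
rewrite [X in _ * X](exch_lt (fun i j => if (i \notin K) && (j \in K) then F j i else 1)).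
rewrite -big_split /= big_mkcond /=.
rewrite [RHS]big_mkcond /=; apply: eq_bigr => i _.
case iK: (i \in K) => /=.
  rewrite [RHS](bigID (fun j : 'I_p.+1 => (i < j)%N)) /=; congr (_ * _).
    rewrite big_mkcond [RHS]big_mkcond /=; apply: eq_bigr => j _.
    by rewrite in_setC; case: (j \in K); case: (i < j)%N.
  rewrite big_mkcond [RHS]big_mkcond /=; apply: eq_bigr => j _.
  case: (ltngtP i j) => ij /=; first by rewrite andbF.
    by rewrite in_setC.
  have -> : j = i by apply: val_inj; apply: esym.
  by rewrite in_setC iK.
by rewrite !big1 ?mulr1 // => j _; rewrite ?andbF.
Qed.

Lemma detvK (C : fieldType) p (z : 'I_p.+1 -> C) (w : C) (hz : injective z) (K : {set 'I_p.+1}) :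
  \det (Vandermonde p.+1 (vK z w K)) =
  \det (Vandermonde p.+1 (\row_j z j)) * Qf w (~: K) *
  \prod_(k in K) \prod_(j in ~: K) Xf z w k j.
Proof.
rewrite !det_Vandermonde -crossE /Qf -big_split /= -big_split /=.
apply: eq_bigr => i _; rewrite -big_split /= -big_split /=.
apply: eq_bigr => j ij; rewrite !mxE !in_setC.
have nij : z i - z j != 0.
  rewrite subr_eq0; apply/eqP => /hz h; move: ij; rewrite h ltnn //.
have nji : z j - z i != 0 by rewrite -opprB oppr_eq0.
rewrite /Xf; case: (i \in K); case: (j \in K) => /=.
- by rewrite !mulr1.
- rewrite !mulr1 -(opprB (z i) (z j)) mulNr.
  by rewrite [_ * (_ / _)]mulrC divfK // opprB mulrC.
- by rewrite !mulr1 !mul1r [RHS]mulrC divfK // [w * _]mulrC.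
- by rewrite !mulr1 mulrBl mulrC [z i * w]mulrC.
Qed.

Lemma Qf_step (C : fieldType) p (w : C) (J : {set 'I_p.+1}) j0 :
  j0 \notin J -> Qf w (j0 |: J) = Qf w J * w ^+ #|J|.
Proof.
move=> nj0.
have E : w ^+ #|J| = \prod_(k in [set j0]) \prod_(j in ~: [set j0]) (if j \in J then w else 1).
  rewrite big_set1 -big_mkcondr /= -prodr_const; apply: eq_bigl => j.
  rewrite !in_setC !in_set1; case: eqP => // ->; exact/negbTE.
rewrite E -crossE /Qf -big_split /=; apply: eq_bigr => i _.
rewrite -big_split /=; apply: eq_bigr => j.
rewrite !in_setU1 !in_set1.
case: (eqVneq i j0) => [->|ni]; case: (eqVneq j j0) => [->|nj] /=.
- by rewrite ltnn.
- by rewrite (negbTE nj0) /= => _; case: (j \in J); rewrite ?mulr1 ?mul1r.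
- by rewrite (negbTE nj0) andbF /= => _; case: (i \in J); rewrite ?mulr1 ?mul1r.
- by rewrite !mulr1.
Qed.

Definition lam (C : fieldType) (t w : C) (tau : int) (n : nat) := t * w ^ (tau + n%:Z).
Definition Pw (C : fieldType) (w : C) n := \prod_(q < n) w ^+ q.
Definition EK (C : fieldType) p (z : 'I_p.+1 -> C) (w : C) (K : {set 'I_p.+1}) :=
  (-1) ^+ #|~: K| * Pw w #|K| / (\det (Vandermonde p.+1 (\row_j z j)) * Qf w (~: K)).
Definition Mat (R : fieldType) p (s : R) (a : 'rV[R]_p.+1) : 'M[R]_p.+1 :=
  \matrix_(i, j) (a 0 j ^+ i * (if i == ord_max then (1 - s * a 0 j)^-1 else 1)).

Lemma detMat (R : fieldType) (p : nat) (s : R) (a : 'rV[R]_p.+1) :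
 (forall j, 1 - s * a 0 j != 0) ->
 \det (Mat s a) * \prod_j (1 - s * a 0 j) = \det (Vandermonde p.+1 a).
Proof.
move=> ha.
pose U : 'M[R]_p.+1 := 1 - s *: \matrix_(i, j) ((i.+1 == j :> nat)%:R).
have detU : \det U = 1.
  rewrite -det_tr det_trig.
    by rewrite big1 // => i _; rewrite !mxE eqxx /= gtn_eqF // mulr0 subr0.
  apply/is_trig_mxP => i j lt_ij; rewrite !mxE.
  have -> : (j == i) = false by apply/eqP => h; move: lt_ij; rewrite h ltnn.
  by rewrite gtn_eqF ?mulr0 ?subrr // ltnS ltnW.
have E : Mat s a *m diag_mx (\row_j (1 - s * a 0 j)) = U *m Vandermonde p.+1 a.
  rewrite mulmxBl mul1mx -scalemxAl.
  apply/matrixP => i j; rewrite mul_mx_diag !mxE.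
  under eq_bigr do rewrite !mxE.
  case: eqP => [->|/eqP ni].
    rewrite divfK ?ha // big1 ?mulr0 ?subr0 // => k _.
    by rewrite gtn_eqF ?mul0r //.
  have lti : (i.+1 < p.+1)%N.
    by rewrite ltnS ltn_neqAle -ltnS ltn_ord andbT; apply: contra ni => /eqP h; apply/eqP/val_inj.
  rewrite (bigD1 (Ordinal lti)) //= eqxx mul1r big1 ?addr0.
    by rewrite mulr1 exprS mulrBr mulr1 mulrA [a 0 j ^+ i * _]mulrC.
  by move=> k nk; rewrite eq_sym (_ : (k == i.+1 :> nat) = false) ?mul0r //; apply/negbTE; apply: contra nk => /eqP h; apply/eqP/val_inj.
have := congr1 determinant E.
by rewrite !det_mulmx detU mul1r det_diag; under eq_bigr do rewrite mxE.
Qed.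

Lemma cof_eq (C : fieldType) p (s s' : C) (a a' : 'rV[C]_p.+1) j :
  (forall k, k != j -> a 0 k = a' 0 k) ->
  cofactor (Mat s a) ord_max j = cofactor (Mat s' a') ord_max j.
Proof.
move=> h; rewrite /cofactor; congr (_ * \det _); apply/matrixP => x y.
rewrite !mxE [lift _ _ == _]eq_sym (negbTE (neq_lift _ _)) h // eq_sym; exact: neq_lift.
Qed.

Lemma alg (F : fieldType) (s P a b DQ zp X cf : F) : b != 0 ->
  s * (P * a) / DQ * (zp * X * cf) + (-s) * P / (DQ * b) * (a * b * zp * X * cf) = 0.
Proof.
move=> hb; apply/eqP; rewrite addr_eq0; apply/eqP; rewrite !mulNr opprK.
rewrite invfM [a * b]mulrC -!mulrA; congr (_ * _); congr (_ * _).
by rewrite mulKf // mulrCA.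
Qed.

Lemma core (C : fieldType) p (z : 'I_p.+1 -> C) (w t : C) (tau : int) (hw : w != 0) :
 \sum_(K : {set 'I_p.+1}) EK z w K * \det (Mat (lam t w tau #|K|) (vK z w K)) = 0.
Proof.
pose T K j := EK z w K * (Mat (lam t w tau #|K|) (vK z w K) ord_max j *
   cofactor (Mat (lam t w tau #|K|) (vK z w K)) ord_max j).
rewrite (eq_bigr (fun K => \sum_j T K j)); last first.
  by move=> K _; rewrite (expand_det_row _ ord_max) mulr_sumr.
rewrite exchange_big /=; apply: big1 => j _.
rewrite (bigID (fun K : {set 'I_p.+1} => j \in K)) /=.
pose h (K : {set 'I_p.+1}) : {set 'I_p.+1} := if j \in K then K :\ j else j |: K.
have hK K : h (h K) = K.
  rewrite /h; case jK: (j \in K).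
    by rewrite setD11 setD1K.
  by rewrite setU11 setU1K ?jK.
rewrite [X in _ + X](reindex_inj (can_inj hK)) /=.
rewrite [X in _ + X](eq_bigl (fun K : {set 'I_p.+1} => j \in K)); last first.
  by move=> K; rewrite /h; case: ifP => jK; rewrite ?setD11 ?setU11.
rewrite -big_split /=; apply: big1 => K jK.
rewrite /h jK /T.
rewrite [cofactor (Mat _ (vK z w (K :\ j))) _ _](@cof_eq _ _ _ (lam t w tau #|K|) _ (vK z w K)); last first.
  by move=> k nk; rewrite !mxE in_setD1 nk.
set cf := cofactor _ _ _.
rewrite !mxE !eqxx setD11 jK.
have cK : #|K| = #|K :\ j|.+1 by rewrite (cardsD1 j K) jK.
have CK : ~: (K :\ j) = j |: ~: K.
  by apply/setP => x; rewrite !inE; case: (x == j).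
have njK : j \notin ~: K by rewrite in_setC jK.
rewrite /EK CK (Qf_step _ njK) cardsU1 njK cK.
set n' := #|K :\ j|.
have hp : (p = n' + #|~: K|)%N.
  by have := cardsC K; rewrite card_ord cK addSn => -[].
have hl : lam t w tau n'.+1 * z j = lam t w tau n' * (w * z j).
  have w1 : w ^ (Posz 1) = w by [].
  rewrite /lam -addn1 PoszD addrA [w ^ (_ + _ + _)]expfzDr // w1.
  by rewrite -!mulrA; congr (_ * _); rewrite mulrCA.
rewrite hl /=.
rewrite /Pw big_ord_recr /= -/(Pw w n') add1n exprS mulN1r.
rewrite exprMn (congr1 (fun k => w ^+ k) hp) exprD.
rewrite [_ * (Qf w _ * _)]mulrA; apply: alg.
exact: expf_neq0.
Qed.
Lemma condE (T : finType) (J K : {set T}) :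
  [disjoint J & K] && (J :|: K == [set: T]) = (J == ~: K).
Proof.
apply/andP/eqP => [[dis /eqP un]|->].
  apply/setP => x; rewrite in_setC; case xK: (x \in K) => /=.
    exact: (disjointFl dis xK).
  by have := in_setT x; rewrite -un in_setU xK orbF.
split; first by rewrite disjoints_subset.
by apply/eqP/setP => x; rewrite !inE; case: (x \in K).
Qed.

Lemma pair_sum (C : nmodType) (T : finType) (F : {set T} * {set T} -> C) :
  \sum_(JK : {set T} * {set T} | [disjoint JK.1 & JK.2] && (JK.1 :|: JK.2 == [set: T])) F JK
  = \sum_(K : {set T}) F (~: K, K).
Proof.
rewrite (eq_bigl (fun JK : {set T} * {set T} => JK.1 == ~: JK.2)); last by move=> [J K]; rewrite condE.
rewrite big_mkcond /=.
transitivity (\sum_(J : {set T}) \sum_(K : {set T}) (if J == ~: K then F (J, K) else 0)).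
  by rewrite pair_big /=; apply: eq_bigr => -[J K].
rewrite exchange_big /=; apply: eq_bigr => K _.
by rewrite -big_mkcond big_pred1_eq.
Qed.

Lemma alg3 (F : fieldType) n c (P PJ PK Cr : F) :
  (-1) ^+ n * ((-1) ^+ c * PJ^-1) * (P * ((-1) ^+ n * PK^-1)) * Cr
  = (-1) ^+ c * (P * (Cr / (PK * PJ))).
Proof.
rewrite [P * ((-1) ^+ n * _)]mulrCA (mulrACA ((-1)^+n)) -exprMn mulrNN mulr1 expr1n mul1r.
rewrite invfM -!mulrA; congr (_ * _).
rewrite mulrCA; congr (_ * _).
by rewrite mulrA mulrC [PJ^-1 * _]mulrC.
Qed.

Lemma alg2 (F : fieldType) (sg P x c d : F) : x != 0 ->
  sg * P / x * (x * c / d) = sg * (P * (c / d)).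
Proof. by move=> hx; rewrite -!mulrA mulKf. Qed.

Theorem lemmaB4 (C : numClosedFieldType) (N : nat) (w : C)
  (hN : (2 <= N)%N) (hw : N.-primitive_root w)
  (m : nat) (hm : (1 <= m)%N) (z : 'I_m -> C) (hz : injective z)
  (t : C) (tau : int)
  (hJ : forall (K : {set 'I_m}) (j : 'I_m), j \notin K ->
          t * z j * w ^ (tau + (#|K|)%:Z + 1) - 1 != 0)
  (hK : forall (K : {set 'I_m}) (k : 'I_m), k \in K ->
          t * z k * w ^ (tau + (#|K|)%:Z) - 1 != 0) :
  \sum_(JK : {set 'I_m} * {set 'I_m} |
          [disjoint JK.1 & JK.2] && (JK.1 :|: JK.2 == [set: 'I_m]))
    ((-1) ^+ #|JK.2|
     * (\prod_(j in JK.1) (t * z j * w ^ (tau + (#|JK.2|)%:Z + 1) - 1)^-1)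
     * (\prod_(q < #|JK.2|)
          (w ^+ q / (t * z (enum_val q) * w ^ (tau + (#|JK.2|)%:Z) - 1)))
     * (\prod_(j in JK.1) \prod_(k in JK.2)
          ((z k - z j * w) / (z k - z j)))) = 0.
Proof.
destruct m as [|p]; first by [].
have hw0 : w != 0.
  apply/eqP => w0; move: (prim_expr_order hw); rewrite w0 expr0n.
  by case: N hN hw => // N' _ _ /= /eqP; rewrite eq_sym oner_eq0.
rewrite pair_sum /= -[RHS](@core _ p z w t tau hw0).
apply: eq_bigr => K _.
set n := #|K|.
set s := lam t w tau n.
have w1 : w ^ (Posz 1) = w by [].
have e1 j : s * z j = t * z j * w ^ (tau + n%:Z) by rewrite /s /lam mulrAC.
have e2 j : s * (w * z j) = t * z j * w ^ (tau + n%:Z + 1).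
  rewrite /s /lam [w ^ (_ + 1)]expfzDr // w1.
  by rewrite -!mulrA; congr (_ * _); rewrite mulrA mulrC.
have ha j : 1 - s * vK z w K 0 j != 0.
  rewrite mxE; case: ifP => jK; [rewrite e1 | rewrite e2]; rewrite -opprB oppr_eq0.
    exact: hK.
  by apply: hJ; rewrite jK.
have hPi : \prod_j (1 - s * vK z w K 0 j) != 0 by apply/prodf_neq0 => j _.
have dM : \det (Mat s (vK z w K)) =
    \det (Vandermonde p.+1 (vK z w K)) / \prod_j (1 - s * vK z w K 0 j).
  by rewrite -(detMat ha) mulfK.
rewrite dM detvK // /EK.
have hD : \det (Vandermonde p.+1 (\row_j z j)) != 0.
  rewrite det_Vandermonde; apply/prodf_neq0 => i0 _; apply/prodf_neq0 => j0 ij.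
  rewrite !mxE subr_eq0; apply/eqP => /hz h; move: ij; by rewrite h ltnn.
have hQ : Qf w (~: K) != 0.
  rewrite /Qf; apply/prodf_neq0 => i0 _; apply/prodf_neq0 => j0 _; case: ifP => _ //; exact: oner_neq0.
rewrite alg2 ?mulf_neq0 //.
have -> : \prod_(j in ~: K) \prod_(k in K) ((z k - z j * w) / (z k - z j)) =
   \prod_(k in K) \prod_(j in ~: K) Xf z w k j by rewrite exchange_big.
have -> : \prod_(q < n) (w ^+ q / (t * z (enum_val q) * w ^ (tau + n) - 1)) =
    Pw w n * ((-1) ^+ n * (\prod_(k in K) (1 - s * z k))^-1).
  rewrite big_split /= -/(Pw w n).
  rewrite -(big_enum_val (fun k => (t * z k * w ^ (tau + n) - 1)^-1)) /=.
  under eq_bigr => k _ do rewrite -opprB invrN -e1.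
  by rewrite prodrN prodfV.
have -> : \prod_(j in ~: K) (t * z j * w ^ (tau + n + 1) - 1)^-1 =
    (-1) ^+ #|~: K| * (\prod_(j in ~: K) (1 - s * (w * z j)))^-1.
  under eq_bigr => j _ do rewrite -opprB invrN -e2.
  by rewrite prodrN prodfV.
have -> : \prod_j (1 - s * vK z w K 0 j) =
    \prod_(k in K) (1 - s * z k) * \prod_(j in ~: K) (1 - s * (w * z j)).
  rewrite (bigID (fun j => j \in K)) /=; congr (_ * _).
    by apply: eq_bigr => j jK; rewrite mxE jK.
  apply: eq_big => j; first by rewrite in_setC.
  by move=> jK; rewrite mxE (negbTE jK).
exact: alg3.
Qed.
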